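(* Let $n\ge 1$, $\lambda>0$, and let $\sigma_\lambda:\mathbb{R}^n\to\mathbb{R}^n$ be the softmax map $\sigma_\lambda(\mathbf{x})_i=\exp(\lambda x_i)/\sum_{j=1}^n\exp(\lambda x_j)$. Then for every $p\in[1,\infty]$: (a) for every $\mathbf{x}\in\mathbb{R}^n$, $\|J_{\sigma_1}(\mathbf{x})\|_p\le \tfrac12$, where $J_{\sigma_1}(\mathbf{x})$ is the Jacobian matrix of $\sigma_1$ at $\mathbf{x}$; (b) for all $\mathbf{x},\mathbf{y}\in\mathbb{R}^n$, $\|\sigma_\lambda(\mathbf{x})-\sigma_\lambda(\mathbf{y})\|_p\le \tfrac{\lambda}{2}\|\mathbf{x}-\mathbf{y}\|_p$.
   Context: For $p\in[1,\infty)$, $\|\mathbf{x}\|_p=(\sum_i|x_i|^p)^{1/p}$ and $\|\mathbf{x}\|_\infty=\max_i|x_i|$. For a matrix $A\in\mathbb{R}^{n\times n}$, $\|A\|_p=\sup_{\mathbf{v}\ne 0}\|A\mathbf{v}\|_p/\|\mathbf{v}\|_p$ denotes the operator norm induced by the vector $\ell_p$ norm. *)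

(* Defs.v *)
From HB Require Import structures.
From mathcomp Require Import all_boot all_order all_algebra.
From mathcomp Require Import all_classical all_reals all_analysis.
Set Implicit Arguments. Unset Strict Implicit. Unset Printing Implicit Defensive.
Import Order.TTheory GRing.Theory Num.Theory.
Import numFieldNormedType.Exports.
Local Open Scope ring_scope.

Definition softmax (R : realType) (n : nat) (lam : R) (x : 'cV[R]_n) : 'cV[R]_n :=
  \col_i (expR (lam * x i 0) / \sum_(j < n) expR (lam * x j 0)).

Definition jacobian_mx (R : realType) (n : nat) (f : 'cV[R]_n -> 'cV[R]_n)
  (x : 'cV[R]_n) : 'M[R]_n :=
  \matrix_(i, j) ('D_(delta_mx j 0 : 'cV[R]_n) (fun y : 'cV[R]_n => f y i 0) x).

(* vector l_p norm, p in [1, +oo] encoded as an extended real *)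
Definition pnorm (R : realType) (n : nat) (p : \bar R) (v : 'cV[R]_n) : R :=
  match p with
  | EFin r => (\sum_(i < n) `|v i 0| `^ r) `^ r^-1
  | _ => \big[Num.max/0]_(i < n) `|v i 0|
  end.

Definition opnorm (R : realType) (n : nat) (p : \bar R) (A : 'M[R]_n) : R :=
  sup [set (pnorm p (A *m v) / pnorm p v) | v in [set v : 'cV[R]_n | v != 0]].

(* Main.v *)
Require Import Defs.
From HB Require Import structures.
From mathcomp Require Import all_boot all_order all_algebra.
From mathcomp Require Import all_classical all_reals all_analysis.
From mathcomp Require Import ring lra.
Set Implicit Arguments. Unset Strict Implicit. Unset Printing Implicit Defensive.
Import Order.TTheory GRing.Theory Num.Theory.
Import numFieldNormedType.Exports.
Local Open Scope ring_scope.

Lemma holder (R : realType) (k : nat) (a b : 'I_k -> R) (p q : R) :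
  (forall i, 0 <= a i) -> (forall i, 0 <= b i) -> 0 < p -> 0 < q ->
  p^-1 + q^-1 = 1 ->
  \sum_i a i * b i <= (\sum_i a i `^ p) `^ p^-1 * (\sum_i b i `^ q) `^ q^-1.
Proof.
move=> + + p0 q0 pq.
elim: k a b => [|k IH] a b ha hb.
  by rewrite !big_ord0 mulr_ge0 // powR_ge0.
rewrite !big_ord_recr /=.
apply: le_trans (lerD (IH _ _ (fun i => ha _) (fun i => hb _)) (lexx _)) _.
apply: le_trans (hoelder2 _ _ _ _ p0 q0 pq) _ => //; try exact: powR_ge0.
rewrite -!powRrM !mulVf ?gt_eqF // !powRr1 //.
- by apply: sumr_ge0 => i _; exact: powR_ge0.
- by apply: sumr_ge0 => i _; exact: powR_ge0.
Qed.
Lemma jensen (R : realType) (k : nat) (w t : 'I_k -> R) (r : R) :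
  (forall i, 0 <= w i) -> (forall i, 0 <= t i) -> 1 <= r ->
  (\sum_i w i * t i) `^ r <= (\sum_i w i) `^ (r - 1) * \sum_i w i * t i `^ r.
Proof.
move=> hw ht; rewrite le_eqVlt => /predU1P[<-|r1].
  rewrite subrr powRr0 mul1r powRr1; last by apply: sumr_ge0 => i _; rewrite mulr_ge0.
  by apply: ler_sum => i _; rewrite powRr1.
have r0 : 0 < r by apply: lt_trans r1.
have ri1 : r^-1 < 1 by rewrite invf_lt1.
set q := (1 - r^-1)^-1.
have q0 : 0 < q by rewrite invr_gt0 subr_gt0.
have pq : q^-1 + r^-1 = 1 by rewrite invrK subrK.
have := @holder R k (fun i => w i `^ q^-1) (fun i => w i `^ r^-1 * t i) q r
  (fun i => powR_ge0 _ _) (fun i => mulr_ge0 (powR_ge0 _ _) (ht i)) q0 r0 pq.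
have -> : \sum_i w i `^ q^-1 * (w i `^ r^-1 * t i) = \sum_i w i * t i.
  apply: eq_bigr => i _; rewrite mulrA -powRD.
  rewrite pq powRr1 //.
  by rewrite pq oner_eq0.
move=> H.
have E1 : \sum_i (w i `^ q^-1) `^ q = \sum_i w i.
  by apply: eq_bigr => i _; rewrite -powRrM mulVf ?gt_eqF // powRr1.
have E2 : \sum_i (w i `^ r^-1 * t i) `^ r = \sum_i w i * t i `^ r.
  apply: eq_bigr => i _; rewrite powRM ?powR_ge0 // -powRrM mulVf ?gt_eqF // powRr1 //.
rewrite E1 E2 in H.
have S0 : 0 <= \sum_i w i * t i by apply: sumr_ge0 => i _; rewrite mulr_ge0.
have W0 : 0 <= \sum_i w i by apply: sumr_ge0.
have X0 : 0 <= \sum_i w i * t i `^ r by apply: sumr_ge0 => i _; rewrite mulr_ge0 ?powR_ge0.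
apply: le_trans (ge0_ler_powR (ltW r0) _ _ H) _; rewrite ?nnegrE //.
  by rewrite mulr_ge0 ?powR_ge0.
rewrite powRM ?powR_ge0 // -!powRrM mulVf ?gt_eqF // powRr1 //.
by rewrite /q invrK mulrBl mul1r mulVf ?gt_eqF // mulrC.
Qed.
Lemma schur_p (R : realType) (k : nat) (b : 'I_k -> 'I_k -> R) (c : R)
  (z v : 'I_k -> R) (r : R) : 0 <= c ->
  (forall i j, 0 <= b i j) -> (forall i, \sum_j b i j <= c) ->
  (forall j, \sum_i b i j <= c) ->
  (forall i, `|z i| <= \sum_j b i j * `|v j|) -> 1 <= r ->
  \sum_i `|z i| `^ r <= c `^ r * \sum_j `|v j| `^ r.
Proof.
move=> c0 b0 hr hc hz r1.
have r0 : 0 < r by apply: lt_le_trans r1.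
apply: le_trans (_ : \sum_i (\sum_j b i j * `|v j|) `^ r <= _).
  apply: ler_sum => i _; apply: (ge0_ler_powR (ltW r0) _ _ (hz i)); rewrite nnegrE //.
  by apply: sumr_ge0 => j _; rewrite mulr_ge0.
apply: le_trans (_ : \sum_i (\sum_j b i j) `^ (r - 1) * \sum_j b i j * `|v j| `^ r <= _).
  by apply: ler_sum => i _; apply: jensen.
apply: le_trans (_ : \sum_i c `^ (r - 1) * \sum_j b i j * `|v j| `^ r <= _).
  apply: ler_sum => i _; apply: ler_wpM2r.
    by apply: sumr_ge0 => j _; rewrite mulr_ge0 ?powR_ge0.
  apply: ge0_ler_powR; rewrite ?nnegrE ?subr_ge0 //.
  by apply: sumr_ge0.
rewrite -mulr_sumr exchange_big /= -(mulr_powRB1 c0 r0) [c * _]mulrC -mulrA.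
apply: ler_wpM2l; first exact: powR_ge0.
rewrite mulr_sumr; apply: ler_sum => j _.
by rewrite -mulr_suml; apply: ler_wpM2r; [exact: powR_ge0 | exact: hc].
Qed.

Lemma schur_inf (R : realType) (k : nat) (b : 'I_k -> 'I_k -> R) (c : R)
  (z v : 'I_k -> R) : 0 <= c ->
  (forall i j, 0 <= b i j) -> (forall i, \sum_j b i j <= c) ->
  (forall i, `|z i| <= \sum_j b i j * `|v j|) ->
  \big[Num.max/0]_i `|z i| <= c * \big[Num.max/0]_i `|v i|.
Proof.
move=> c0 b0 hr hz.
have M0 : 0 <= \big[Num.max/0]_i `|v i|.
  by apply: le_trans (bigmax_ge_id _ _ _) ; [] || apply: bigmax_ge_id.
apply: bigmax_le; first by rewrite mulr_ge0.
move=> i _; apply: le_trans (hz i) _.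
apply: le_trans (_ : \sum_j b i j * \big[Num.max/0]_i `|v i| <= _).
  apply: ler_sum => j _; apply: ler_wpM2l => //.
  exact: le_bigmax.
by rewrite -mulr_suml ler_wpM2r.
Qed.
Lemma quarter_bound (R : realFieldType) (s l : R) : 0 <= l -> 2 * l * (s * (1 - s)) <= l / 2.
Proof. move=> l0; have := mulr_ge0 l0 (sqr_ge0 (2*s-1)). nra. Qed.
Definition bmat (R : realType) (k : nat) (lam : R) (s : 'I_k -> R) (i j : 'I_k) : R :=
  lam * s i * (if i == j then 1 - s i else s j).

Lemma bmat_facts (R : realType) (k : nat) (lam : R) (s v : 'I_k -> R) :
  0 <= lam -> (forall i, 0 <= s i) -> \sum_i s i = 1 ->
  [/\ forall i j, 0 <= bmat lam s i j,
      forall i, \sum_j bmat lam s i j <= lam / 2,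
      forall j, \sum_i bmat lam s i j <= lam / 2 &
      forall i, `|lam * (s i * (v i - \sum_j s j * v j))|
                <= \sum_j bmat lam s i j * `|v j| ].
Proof.
move=> l0 s0 s1.
have s1i i : \sum_(j | j != i) s j = 1 - s i.
  by apply/eqP; rewrite eq_sym subr_eq -{1}s1 (bigD1 i) //= addrC.
have sle1 i : s i <= 1.
  by rewrite -(subr_ge0) -s1i; apply: sumr_ge0.
have b0 : forall i j, 0 <= bmat lam s i j.
  move=> i j; rewrite /bmat mulr_ge0 ?mulr_ge0 //.
  by case: eqP => _; rewrite ?subr_ge0.
have bsym i j : bmat lam s i j = bmat lam s j i.
  rewrite /bmat eq_sym; case: eqP => [->//|_]; by rewrite -!mulrA [s i * _]mulrC.
have rows i : \sum_j bmat lam s i j <= lam / 2.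
  rewrite (bigD1 i) //= {1}/bmat eqxx.
  rewrite (eq_bigr (fun j => lam * s i * s j)); last first.
    by move=> j /negPf ji; rewrite /bmat eq_sym ji.
  rewrite -mulr_sumr s1i.
  apply: le_trans (quarter_bound (s i) l0); rewrite le_eqVlt; apply/orP; left; apply/eqP; ring.
split => //.
  by move=> j; under eq_bigr do rewrite bsym; exact: rows.
move=> i.
rewrite [X in _ <= X](bigD1 i) //= {1}/bmat eqxx.
rewrite [X in _ <= _ + X](eq_bigr (fun j => lam * s i * (s j * `|v j|))); last first.
  by move=> j /negPf ji; rewrite /bmat eq_sym ji mulrA.
rewrite -mulr_sumr (bigD1 i) //= -mulrA -mulrDr normrM ger0_norm //.
rewrite -mulrA; apply: ler_wpM2l => //.
rewrite normrM ger0_norm //; apply: ler_wpM2l => //.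
rewrite opprD addrA -{1}(mul1r (v i)) -mulrBl.
apply: le_trans (ler_normB _ _) _.
apply: lerD; first by rewrite normrM ger0_norm ?subr_ge0.
apply: le_trans (ler_norm_sum _ _ _) _.
by apply: ler_sum => j _; rewrite normrM ger0_norm.
Qed.
Lemma core_p (R : realType) (k : nat) (lam : R) (s v : 'I_k -> R) (r : R) :
  0 <= lam -> (forall i, 0 <= s i) -> \sum_i s i = 1 -> 1 <= r ->
  (\sum_i `|lam * (s i * (v i - \sum_j s j * v j))| `^ r) `^ r^-1
    <= lam / 2 * (\sum_i `|v i| `^ r) `^ r^-1.
Proof.
move=> l0 s0 s1 r1.
have r0 : 0 < r by apply: lt_le_trans r1.
have [b0 rows cols hz] := bmat_facts v l0 s0 s1.
have c0 : 0 <= lam / 2 by rewrite divr_ge0.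
have H := schur_p c0 b0 rows cols hz r1.
have ri0 : 0 <= r^-1 by rewrite invr_ge0 ltW.
have S0 : 0 <= \sum_j `|v j| `^ r by apply: sumr_ge0 => i _; exact: powR_ge0.
apply: le_trans (ge0_ler_powR ri0 _ _ H) _; rewrite ?nnegrE.
- by apply: sumr_ge0 => i _; exact: powR_ge0.
- by rewrite mulr_ge0 ?powR_ge0.
rewrite powRM ?powR_ge0 //.
by rewrite -powRrM mulfV ?gt_eqF // powRr1.
Qed.

Lemma core_inf (R : realType) (k : nat) (lam : R) (s v : 'I_k -> R) :
  0 <= lam -> (forall i, 0 <= s i) -> \sum_i s i = 1 ->
  \big[Num.max/0]_i `|lam * (s i * (v i - \sum_j s j * v j))|
    <= lam / 2 * \big[Num.max/0]_i `|v i|.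
Proof.
move=> l0 s0 s1.
have [b0 rows cols hz] := bmat_facts v l0 s0 s1.
have c0 : 0 <= lam / 2 by rewrite divr_ge0.
exact: schur_inf c0 b0 rows hz.
Qed.
Lemma is_derive_comp1 (R : realType) (f g : R -> R) (x df dg : R) :
  is_derive x 1 f df -> is_derive (f x) 1 g dg -> is_derive x 1 (g \o f) (dg * df).
Proof.
move=> hf hg.
have df1 : derivable f x 1 by exact: ex_derive.
have dg1 : derivable g (f x) 1 by exact: ex_derive.
apply: DeriveDef.
  apply/derivable1_diffP; apply: differentiable_comp; exact/derivable1_diffP.
by rewrite -derive1E derive1_comp // !derive1E !derive_val.
Qed.
Lemma is_derive_expaff (R : realType) (a b t : R) :
  is_derive t 1 (fun u => expR (a + u * b)) (b * expR (a + t * b)).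
Proof.
have h0 := is_deriveD (is_derive_cst a t 1) (is_deriveM (is_derive_id t 1) (is_derive_cst b t 1)).
have e : (fun u : R => a + u * b) = (cst a + id * cst b) by apply/funext.
have h1 : is_derive t 1 (fun u : R => a + u * b) b.
  rewrite e; apply: is_derive_eq h0 _.
  by rewrite scaler0 !add0r /GRing.scale /= mulr1.
have := is_derive_comp1 h1 (is_derive_expR _).
by rewrite mulrC.
Qed.
Lemma sumexp_gt0 (R : realType) (k : nat) (f : 'I_k -> R) : (0 < k)%N -> 0 < \sum_j expR (f j).
Proof.
move=> k0; rewrite (bigD1 (Ordinal k0)) //=; apply: (lt_le_trans (expR_gt0 (f (Ordinal k0)))).
by rewrite lerDl; apply: sumr_ge0 => j _; exact: expR_ge0.
Qed.

Lemma is_derive_sm (R : realType) (k : nat) (a b : 'I_k -> R) (i : 'I_k) (t : R) :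
  (0 < k)%N ->
  is_derive t 1 (fun u => expR (a i + u * b i) / \sum_j expR (a j + u * b j))
   ((expR (a i + t * b i) / \sum_j expR (a j + t * b j)) *
    (b i - \sum_j (expR (a j + t * b j) / \sum_l expR (a l + t * b l)) * b j)).
Proof.
move=> k0.
set S := fun u => \sum_j expR (a j + u * b j).
have Spos u : 0 < S u by exact: sumexp_gt0.
have hS : is_derive t 1 S (\sum_j b j * expR (a j + t * b j)).
  have := @is_derive_sum R R R k (fun j (u : R) => expR (a j + u * b j)) t 1
     (fun j => b j * expR (a j + t * b j)) (fun j => is_derive_expaff _ _ _).
  have -> : (\sum_(j < k) (fun u : R => expR (a j + u * b j))) = S.
    by apply/funext => u; rewrite fct_sumE.
  done.
have hV : is_derive t 1 (fun u => (S u)^-1) (- (S t) ^- 2 *: \sum_j b j * expR (a j + t * b j)).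
  apply: DeriveDef.
    apply: derivableV; first by rewrite gt_eqF.
    exact: ex_derive.
  by rewrite deriveV ?gt_eqF ?derive_val //; exact: ex_derive.
have hM := is_deriveM (is_derive_expaff (a i) (b i) t) hV.
have e : (fun u => expR (a i + u * b i) / S u) = (fun u => expR (a i + u * b i)) * (fun u => (S u)^-1).
  by apply/funext.
rewrite -e in hM.
apply: is_derive_eq hM _.
have -> : \sum_j expR (a j + t * b j) / (\sum_l expR (a l + t * b l)) * b j
   = (\sum_j b j * expR (a j + t * b j)) / S t.
  by rewrite mulr_suml; apply: eq_bigr => j _; rewrite /S; ring.
rewrite -/(S t).
have := Spos t; move: (S t) => T T0.
rewrite /GRing.scale /=.
field; exact: lt0r_neq0.
Qed.
Lemma derive_line (R : realType) (V : normedModType R) (f : V -> R) (x v : V) (df : R) :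
  is_derive (0:R) 1 (fun h : R => f (h *: v + x)) df -> 'D_v f x = df.
Proof.
move=> H; rewrite -(@derive_val _ _ _ _ _ _ _ H) /derive; congr lim.
f_equal.
apply/funext => h /=; rewrite /shift /= scale0r add0r addr0.
by rewrite /GRing.scale /= mulr1.
Qed.
Lemma softmax_line (R : realType) (n : nat) (lam : R) (x v : 'cV[R]_n) (i : 'I_n) :
  (fun h : R => softmax lam (h *: v + x) i 0) =
  (fun u => expR (lam * x i 0 + u * (lam * v i 0)) /
            \sum_j expR (lam * x j 0 + u * (lam * v j 0))).
Proof.
apply/funext => h; rewrite /softmax mxE.
have e k : lam * (h *: v + x) k 0 = lam * x k 0 + h * (lam * v k 0).
  by rewrite !mxE mulrDr addrC mulrCA.
by rewrite e; congr (_ / _); apply: eq_bigr => k _; rewrite e.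
Qed.

Lemma jac_entry (R : realType) (n : nat) (x : 'cV[R]_n) (i j : 'I_n) : (0 < n)%N ->
  jacobian_mx (@softmax R n 1) x i j =
  softmax 1 x i 0 * ((delta_mx j 0 : 'cV[R]_n) i 0 -
     \sum_k softmax 1 x k 0 * (delta_mx j 0 : 'cV[R]_n) k 0).
Proof.
move=> hn; rewrite /jacobian_mx mxE; apply: derive_line.
rewrite softmax_line.
have H := is_derive_sm (fun k => 1 * x k 0) (fun k => 1 * (delta_mx j 0 : 'cV[R]_n) k 0) i 0 hn.
apply: is_derive_eq H _.
have e0 k : 1 * x k 0 + 0 * (1 * (delta_mx j 0 : 'cV[R]_n) k 0) = x k 0.
  by rewrite mul0r addr0 mul1r.
have sE k : softmax 1 x k 0 = expR (x k 0) / \sum_l expR (x l 0).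
  by rewrite /softmax mxE; under eq_bigr do rewrite mul1r; rewrite mul1r.
under eq_bigr do rewrite e0.
under [X in _ * (_ - X)]eq_bigr do rewrite e0 mul1r.
under [X in _ = _ * (_ - X)]eq_bigr do rewrite sE.
by rewrite e0 sE mul1r.
Qed.
Lemma dsum (R : realType) (n : nat) (k : 'I_n) (f : 'I_n -> R) :
  \sum_j (delta_mx j 0 : 'cV[R]_n) k 0 * f j = f k.
Proof.
rewrite (bigD1 k) //= mxE !eqxx mul1r big1 ?addr0 // => j /negPf jk.
by rewrite mxE eq_sym jk mul0r.
Qed.

Lemma jac_mul (R : realType) (n : nat) (x v : 'cV[R]_n) (i : 'I_n) : (0 < n)%N ->
  (jacobian_mx (@softmax R n 1) x *m v) i 0 =
  1 * (softmax 1 x i 0 * (v i 0 - \sum_j softmax 1 x j 0 * v j 0)).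
Proof.
move=> hn; rewrite mxE mul1r.
under eq_bigr do rewrite jac_entry // -mulrA mulrBl.
rewrite -mulr_sumr sumrB dsum; congr (_ * (_ - _)).
under eq_bigr do rewrite mulr_suml.
rewrite exchange_big /=; apply: eq_bigr => k _.
under eq_bigr do rewrite -mulrA.
by rewrite -mulr_sumr dsum.
Qed.
Lemma mvt_sm (R : realType) (n : nat) (lam : R) (x y : 'cV[R]_n) (w : 'I_n -> R) :
  (0 < n)%N ->
  exists c : R, \sum_i w i * (softmax lam x i 0 - softmax lam y i 0) =
   \sum_i w i * (lam * (softmax lam (c *: (x - y) + y) i 0 *
      ((x - y) i 0 - \sum_j softmax lam (c *: (x - y) + y) j 0 * (x - y) j 0))).
Proof.
move=> hn.
set d := x - y.
pose a k := lam * y k 0. pose b k := lam * d k 0.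
pose G i t := expR (a i + t * b i) / \sum_j expR (a j + t * b j).
have Gs i t : G i t = softmax lam (t *: d + y) i 0.
  by have := congr1 (fun f => f t) (softmax_line lam y d i).
pose dG i t := G i t * (b i - \sum_j G j t * b j).
have hG i (t : R) : is_derive t 1 (G i) (dG i t) := is_derive_sm a b i t hn.
pose F t := \sum_i w i * G i t.
have hF (t : R) : is_derive t 1 F (\sum_i w i * dG i t).
  have := @is_derive_sum R R R n (fun i => w i *: G i) t 1 (fun i => w i *: dG i t)
    (fun i => is_deriveZ (w i) (hG i t)).
  have -> : \sum_(i < n) (w i *: G i) = F.
    by apply/funext => u; rewrite fct_sumE.
  done.
have contF : continuous F.
  move=> t; apply: differentiable_continuous; apply/derivable1_diffP; exact: ex_derive.
have [c _ hc] := MVT ltr01 (fun t _ => hF t) (continuous_subspaceT contF).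
exists c.
have -> : \sum_i w i * (softmax lam x i 0 - softmax lam y i 0) = F 1 - F 0.
  rewrite /F -sumrB; apply: eq_bigr => i _; rewrite -mulrBr !Gs scale1r scale0r add0r.
  by rewrite /d subrK.
rewrite hc subr0 mulr1; apply: eq_bigr => i _; congr (_ * _).
rewrite /dG !Gs /b.
under eq_bigr do rewrite Gs mulrCA.
rewrite -mulr_sumr; ring.
Qed.
Lemma softmax_ge0 (R : realType) (n : nat) (lam : R) (x : 'cV[R]_n) i :
  0 <= softmax lam x i 0.
Proof.
rewrite /softmax mxE divr_ge0 ?expR_ge0 //.
by apply: sumr_ge0 => j _; exact: expR_ge0.
Qed.

Lemma softmax_sum1 (R : realType) (n : nat) (lam : R) (x : 'cV[R]_n) :
  (0 < n)%N -> \sum_i softmax lam x i 0 = 1.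
Proof.
move=> hn; under eq_bigr do rewrite /softmax mxE.
by rewrite -mulr_suml mulfV // gt_eqF // sumexp_gt0.
Qed.

Lemma pnorm_ge0 (R : realType) (n : nat) (p : \bar R) (v : 'cV[R]_n) :
  0 <= pnorm p v.
Proof.
case: p => [r| |] /=; first exact: powR_ge0.
- by elim/big_ind: _ => // a b ha hb; rewrite le_max ha.
- by elim/big_ind: _ => // a b ha hb; rewrite le_max ha.
Qed.

Lemma pnorm_core (R : realType) (n : nat) (p : \bar R) (lam : R) (s : 'I_n -> R)
  (w u : 'cV[R]_n) : (1 <= p)%E -> 0 <= lam -> (forall i, 0 <= s i) ->
  \sum_i s i = 1 ->
  (forall i, w i 0 = lam * (s i * (u i 0 - \sum_j s j * u j 0))) ->
  pnorm p w <= lam / 2 * pnorm p u.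
Proof.
move=> p1 l0 s0 s1 hw.
case: p p1 => [r| |] //= p1.
  under eq_bigr do rewrite hw.
  by apply: core_p => //; rewrite -lee_fin.
under eq_bigr do rewrite hw.
exact: core_inf.
Qed.

Lemma pnorm_gt0 (R : realType) (n : nat) (p : \bar R) (v : 'cV[R]_n) :
  (1 <= p)%E -> v != 0 -> 0 < pnorm p v.
Proof.
move=> p1 vn0.
have [i vi] : exists i, v i 0 != 0.
  apply/not_existsP => H; move/eqP: vn0; apply; apply/matrixP => i j.
  rewrite (ord1 j) [RHS]mxE; have := H i; by case: eqP.
case: p p1 => [r| |] //= p1.
  apply: powR_gt0; rewrite (bigD1 i) //=.
  apply: (lt_le_trans (y := `|v i 0| `^ r)).
    by apply: powR_gt0; rewrite normr_gt0.
  by rewrite lerDl; apply: sumr_ge0 => j _; exact: powR_ge0.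
apply: (lt_le_trans (y := `|v i 0|)); first by rewrite normr_gt0.
exact: le_bigmax.
Qed.
Lemma part_a (R : realType) (n : nat) (p : \bar R) (x : 'cV[R]_n) :
  (1 <= n)%N -> (1 <= p)%E ->
  opnorm p (jacobian_mx (@softmax R n 1) x) <= 2^-1.
Proof.
move=> hn hp.
rewrite /opnorm; apply: ge_sup.
  pose v0 : 'cV[R]_n := const_mx 1.
  have v0n : v0 != 0.
    apply/negP => /eqP /matrixP H; have := H (Ordinal hn) 0; rewrite !mxE.
    by apply/eqP; rewrite oner_neq0.
  by exists (pnorm p (jacobian_mx (@softmax R n 1) x *m v0) / pnorm p v0); exists v0.
move=> _ [v vn0 <-].
have pv := pnorm_gt0 hp vn0.
rewrite ler_pdivrMr //.
apply: le_trans (pnorm_core (lam:=1) hp ler01 (softmax_ge0 1 x) (softmax_sum1 1 x hn)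
   (fun i => jac_mul x v i hn)) _.
by rewrite div1r.
Qed.
Lemma ind_sum (R : realType) (n : nat) (i : 'I_n) (f : 'I_n -> R) :
  \sum_k ((k == i)%:R : R) * f k = f i.
Proof.
rewrite (bigD1 i) //= eqxx mul1r big1 ?addr0 // => k /negPf ->.
by rewrite mul0r.
Qed.

Lemma mxsubE (R : realType) (m k : nat) (A B : 'M[R]_(m, k)) i j :
  (A - B) i j = A i j - B i j.
Proof. by rewrite !mxE. Qed.

Lemma part_b_inf (R : realType) (n : nat) (lam : R) (x y : 'cV[R]_n) :
  (1 <= n)%N -> 0 < lam ->
  pnorm +oo (softmax lam x - softmax lam y) <= lam / 2 * pnorm +oo (x - y).
Proof.
move=> hn hl.
have l0 : 0 <= lam by exact: ltW.
rewrite [X in X <= _]/pnorm; apply: bigmax_le.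
  by rewrite mulr_ge0 ?divr_ge0 // (pnorm_ge0 +oo).
move=> i _.
have [c hc] := mvt_sm lam x y (fun k => (k == i)%:R) hn.
rewrite !ind_sum in hc.
rewrite mxsubE hc.
apply: le_trans (_ : `|lam * (softmax lam (c *: (x - y) + y) i 0 *
     ((x - y) i 0 - \sum_j softmax lam (c *: (x - y) + y) j 0 * (x - y) j 0))|
   <= \big[Num.max/0]_k `|lam * (softmax lam (c *: (x - y) + y) k 0 *
     ((x - y) k 0 - \sum_j softmax lam (c *: (x - y) + y) j 0 * (x - y) j 0))|) _.
  exact: (le_bigmax _ (fun k => `|lam * (softmax lam (c *: (x - y) + y) k 0 *
     ((x - y) k 0 - \sum_j softmax lam (c *: (x - y) + y) j 0 * (x - y) j 0))|) i).
apply: (@core_inf R n lam _ (fun k => (x - y) k 0)) => //.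
  exact: softmax_ge0.
exact: softmax_sum1.
Qed.
Lemma part_b_r (R : realType) (n : nat) (lam : R) (x y : 'cV[R]_n) (r : R) :
  (1 <= n)%N -> 0 < lam -> 1 <= r ->
  pnorm r%:E (softmax lam x - softmax lam y) <= lam / 2 * pnorm r%:E (x - y).
Proof.
move=> hn hl r1.
have l0 : 0 <= lam by exact: ltW.
have r0 : 0 < r by apply: lt_le_trans r1.
rewrite /pnorm.
set u := softmax lam x - softmax lam y.
set w := fun i => Num.sg (u i 0) * `|u i 0| `^ (r - 1).
have [c hc] := mvt_sm lam x y w hn.
set sc := fun i => softmax lam (c *: (x - y) + y) i 0.
set z := fun i => lam * (sc i * ((x - y) i 0 - \sum_j sc j * (x - y) j 0)).
have hZ : (\sum_i `|z i| `^ r) `^ r^-1 <= lam / 2 * (\sum_i `|(x - y) i 0| `^ r) `^ r^-1.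
  apply: (@core_p R n lam sc (fun k => (x - y) k 0)) => //.
    by move=> i; exact: softmax_ge0.
  exact: softmax_sum1.
set S := \sum_i `|u i 0| `^ r.
have hS : S <= \sum_i `|u i 0| `^ (r - 1) * `|z i|.
  have -> : S = \sum_i w i * (softmax lam x i 0 - softmax lam y i 0).
    apply: eq_bigr => i _; rewrite /w -mxsubE -/u mulrAC -normrEsg mulrC.
    by rewrite mulrC mulr_powRB1.
  rewrite hc; apply: ler_sum => i _.
  apply: le_trans (ler_norm _) _; rewrite normrM /w normrM normr_sg ger0_norm ?powR_ge0 //.
  rewrite -mulrA; apply: ler_piMl; first by rewrite mulr_ge0 ?powR_ge0.
  by case: (_ != _).
apply: le_trans hZ.
have S0 : 0 <= S by apply: sumr_ge0 => i _; exact: powR_ge0.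
move: r1; rewrite le_eqVlt => /predU1P[r1|r1].
  rewrite -r1 in hS *; rewrite invr1 powRr1 // powRr1; last first.
    by apply: sumr_ge0 => i _; exact: powR_ge0.
  apply: le_trans hS _; apply: ler_sum => i _.
  by rewrite subrr powRr0 mul1r powRr1.
have ri1 : r^-1 < 1 by rewrite invf_lt1.
set q := (1 - r^-1)^-1.
have q0 : 0 < q by rewrite invr_gt0 subr_gt0.
have pq : q^-1 + r^-1 = 1 by rewrite invrK subrK.
have H := @holder R n (fun i => `|u i 0| `^ (r - 1)) (fun i => `|z i|) q r
  (fun i => powR_ge0 _ _) (fun i => normr_ge0 _) q0 r0 pq.
have rq : (r - 1) * q = r.
  have e1 : r - 1 = r * (1 - r^-1) by rewrite mulrBr mulr1 mulfV // gt_eqF.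
  by rewrite /q e1 -mulrA mulfV ?mulr1 // gt_eqF // subr_gt0.
have E : \sum_i (`|u i 0| `^ (r - 1)) `^ q = S.
  by apply: eq_bigr => i _; rewrite -powRrM rq.
rewrite E in H.
have hS2 := le_trans hS H.
move: S0; rewrite le_eqVlt => /predU1P[S0|S0].
  by rewrite -S0 powR0 ?invr_eq0 ?gt_eqF // powR_ge0.
have Sq : 0 < S `^ q^-1 by exact: powR_gt0.
rewrite -(ler_pM2r Sq).
rewrite -powRD; last by rewrite addrC pq oner_eq0.
rewrite [r^-1 + _]addrC pq powRr1; last exact: ltW.
by rewrite mulrC.
Qed.

Unset Implicit Arguments.

Theorem theorem1 (R : realType) (n : nat) (hn : (1 <= n)%N) (lam : R)
  (hlam : 0 < lam) (p : \bar R) (hp : (1 <= p)%E) :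
  (forall x : 'cV[R]_n, opnorm p (jacobian_mx (@softmax R n 1) x) <= 2^-1) /\
  (forall x y : 'cV[R]_n,
     pnorm p (softmax lam x - softmax lam y) <= lam / 2 * pnorm p (x - y)).
Proof.
split.
  by move=> x; exact: part_a.
move=> x y; case: p hp => [r| |] // hp.
  by apply: part_b_r => //; rewrite -lee_fin.
exact: part_b_inf.
Qed.
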